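(* There is an algebraic weak factorization system $(\mathsf{L},\mathsf{R})$ on the category $\mathsf{cSet}$ of cartesian cubical sets whose $\mathsf{R}$-algebras are exactly the uniform Kan fibrations: for every map $f:Y\to X$, $\mathsf{R}$-algebra structures on $f$ correspond to uniform Kan fibration structures on $f$.
   Context: Let $\mathbb{B}$ be the category of finite sets $[n]=\{\bot,x_1,\dots,x_n,\top\}$ ($n\ge0$, $\bot\ne\top$) and functions preserving $\bot,\top$; $\mathsf{cSet}$ is the category of presheaves on $\mathbb{B}^{op}$. $\mathrm{I}^n$ is the representable on $[n]$, $\mathrm{I}^n\cong\mathrm{I}\times\dots\times\mathrm{I}$, $\mathrm{I}=\mathrm{I}^1$, $\mathrm{I}^0=1$; the two maps $[1]\to[0]$ give endpoints $0,1:1\to\mathrm{I}$. For $1\le i\le n$, $d\in\{0,1\}$, the face $\alpha_i^d:\mathrm{I}^{n-1}\to\mathrm{I}^n$ inserts $d$ in coordinate $i$; for $e\in\{0,1\}$ the open box $\sqcup^n_e\rightarrowtail\mathrm{I}^n$ is the union of the images of all faces $\alpha_i^d$ with $(i,d)\ne(1,e)$, with inclusion $i^n_e$. A uniform Kan fibration structure on $f:Y\to X$ consists of, for each $n\ge1$, $e\in\{0,1\}$, $k\ge1$, and each commutative square $b:\mathrm{I}^k\times\sqcup^n_e\to Y$, $a:\mathrm{I}^k\times\mathrm{I}^n\to X$ with $fb=a\circ(1\times i^n_e)$, a chosen diagonal filler $\phi(a,b):\mathrm{I}^k\times\mathrm{I}^n\to Y$ (so $\phi(a,b)\circ(1\times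 i^n_e)=b$ and $f\phi(a,b)=a$), such that for every map $\alpha:\mathrm{I}^j\to\mathrm{I}^k$ ($j\ge1$), $\phi(a,b)\circ(\alpha\times1)=\phi(a\circ(\alpha\times1),b\circ(\alpha\times1))$. An algebraic weak factorization system on a category $\mathcal{C}$ is a functorial factorization $f=R(f)\circ L(f)$ (with $L(f):X\to E(f)$, $R(f):E(f)\to Y$ for $f:X\to Y$, functorial in commutative squares), such that $R$, regarded as an endofunctor of the slice $\mathcal{C}/Y$ (or of $\mathcal{C}^{\to}$) pointed by $L$, carries a multiplication making it a monad, and $L$, regarded as an endofunctor of $X/\mathcal{C}$ copointed by $R$, carries a comultiplication making it a comonad. $\mathsf{R}$-algebras are algebras for this monad $R$. *)

(* Defs.v *)
(* MathComp (boot) world.  Cartesian cubical sets as presheaves on B^op,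
   i.e. covariant functors B -> Type; algebraic weak factorization systems;
   uniform Kan fibration structures. *)
From Stdlib Require Import FunctionalExtensionality ProofIrrelevance.
From mathcomp Require Import all_boot.

Set Implicit Arguments.
Unset Strict Implicit.
Unset Printing Implicit Defensive.

(* [n] = {bot, x_1, ..., x_n, top} is 'I_(n.+2): bot = 0, x_i = i, top = n+1. *)
Definition bot (n : nat) : 'I_(n.+2) := ord0.
Definition top (n : nat) : 'I_(n.+2) := ord_max.

Definition Bmor (m n : nat) :=
  { f : 'I_(m.+2) -> 'I_(n.+2) | (f (bot m) == bot n) && (f (top m) == top n) }.

Definition Bfun m n (f : Bmor m n) : 'I_(m.+2) -> 'I_(n.+2) := proj1_sig f.

Lemma Bcomp_proof m n p (g : Bmor n p) (f : Bmor m n) :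
  (Bfun g (Bfun f (bot m)) == bot p) && (Bfun g (Bfun f (top m)) == top p).
Proof.
case: f => f /= /andP[/eqP -> /eqP ->]; case: g => g /= /andP[-> ->]; done.
Qed.

Definition Bcomp m n p (g : Bmor n p) (f : Bmor m n) : Bmor m p :=
  exist _ (fun i => Bfun g (Bfun f i)) (Bcomp_proof g f).

Definition Bid n : Bmor n n := exist _ (fun i => i) (introT andP (conj (eqxx _) (eqxx _))).

Lemma Bmor_ext m n (f g : Bmor m n) : Bfun f =1 Bfun g -> f = g.
Proof.
case: f g => f pf [g pg] /= H.
have E : f = g by apply: functional_extensionality.
subst; congr exist; exact: bool_irrelevance.
Qed.

Record cSet := CSet {
  ob :> nat -> Type;
  act : forall m n, Bmor m n -> ob m -> ob n;
  act_id : forall n (x : ob n), act (Bid n) x = x;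
  act_comp : forall m n p (f : Bmor m n) (g : Bmor n p) (x : ob m),
      act (Bcomp g f) x = act g (act f x)
}.
Arguments act {c m n}.

Unset Implicit Arguments.
Record hom (X Y : cSet) := Hom {
  cmp :> forall n, X n -> Y n;
  natural : forall m n (f : Bmor m n) (x : X m), cmp n (act f x) = act f (cmp m x)
}.

Set Implicit Arguments.
Arguments cmp {X Y}.
Arguments Hom {X Y}.

Lemma comp_natural (X Y Z : cSet) (g : hom Y Z) (f : hom X Y) m n (a : Bmor m n) (x : X m) :
  g n (f n (act a x)) = act a (g m (f m x)).
Proof. by rewrite natural natural. Qed.

Definition hcomp (X Y Z : cSet) (g : hom Y Z) (f : hom X Y) : hom X Z :=
  @Hom X Z (fun n x => g n (f n x)) (@comp_natural X Y Z g f).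

Definition idh (X : cSet) : hom X X := @Hom X X (fun n x => x) (fun _ _ _ _ => erefl).

Lemma cube_id n m (g : Bmor n m) : Bcomp (Bid m) g = g.
Proof. exact: Bmor_ext. Qed.
Lemma cube_comp n m p q (f : Bmor m p) (h : Bmor p q) (g : Bmor n m) :
  Bcomp (Bcomp h f) g = Bcomp h (Bcomp f g).
Proof. exact: Bmor_ext. Qed.

Definition cube (n : nat) : cSet :=
  @CSet (fun m => Bmor n m) (fun m p f g => Bcomp f g)
        (@cube_id n) (fun m p q f h g => cube_comp f h g).

Lemma prodP_id (X Y : cSet) n (x : X n * Y n) : (act (Bid n) x.1, act (Bid n) x.2) = x.
Proof. by case: x => a b /=; rewrite !act_id. Qed.
Lemma prodP_comp (X Y : cSet) m n p (f : Bmor m n) (g : Bmor n p) (x : X m * Y m) :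
  (act (Bcomp g f) x.1, act (Bcomp g f) x.2) = (act g (act f x.1), act g (act f x.2)).
Proof. by rewrite /= !act_comp. Qed.

Definition prodP (X Y : cSet) : cSet :=
  @CSet (fun n => (X n * Y n)%type) (fun m n f x => (act f x.1, act f x.2))
        (@prodP_id X Y) (@prodP_comp X Y).

Lemma prod_map_natural (A A' B B' : cSet) (a : hom A A') (b : hom B B') m n (f : Bmor m n)
  (x : prodP A B m) :
  (a n (act f x).1, b n (act f x).2) = @act (prodP A' B') m n f (a m x.1, b m x.2).
Proof. by rewrite /= !natural. Qed.

Definition prod_map (A A' B B' : cSet) (a : hom A A') (b : hom B B') :
  hom (prodP A B) (prodP A' B') :=
  @Hom (prodP A B) (prodP A' B') (fun n x => (a n x.1, b n x.2)) (@prod_map_natural A A' B B' a b).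

Definition endpt (m : nat) (d : bool) : 'I_(m.+2) := if d then top m else bot m.

(* g : [n] -> [m] lies in the image of the face alpha_i^d iff g(x_i) = d.
   The open box ⊔^n_e is the union of the images of the faces alpha_i^d with
   1 <= i <= n, (i,d) <> (1,e). *)
Definition inbox (n : nat) (e : bool) m (g : Bmor n m) : bool :=
  [exists i : 'I_(n.+2), [exists d : bool,
     [&& 0 < (i : nat) <= n, ((i : nat), d) != (1, e) & Bfun g i == endpt m d]]].

Lemma endpt_pres m p (f : Bmor m p) d : Bfun f (endpt m d) = endpt p d.
Proof. by case: f => f /= /andP[/eqP H1 /eqP H2]; case: d. Qed.

Lemma inbox_act n e m p (f : Bmor m p) (g : Bmor n m) :
  inbox e g -> inbox e (Bcomp f g).
Proof.
case/existsP=> i /existsP[d /and3P[H1 H2 /eqP H3]].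
apply/existsP; exists i; apply/existsP; exists d.
by rewrite H1 H2 /= H3 endpt_pres.
Qed.

Definition box_act n e m p (f : Bmor m p) (g : {g : Bmor n m | inbox e g}) :
  {g : Bmor n p | inbox e g} :=
  exist _ (Bcomp f (proj1_sig g)) (inbox_act f (proj2_sig g)).

Lemma box_id n e m (g : {g : Bmor n m | inbox e g}) : box_act (Bid m) g = g.
Proof.
case: g => g pg; rewrite /box_act /=.
move: (inbox_act _ _); rewrite cube_id => q; congr exist; exact: bool_irrelevance.
Qed.

Lemma box_comp n e m p q (f : Bmor m p) (h : Bmor p q) (g : {g : Bmor n m | inbox e g}) :
  box_act (Bcomp h f) g = box_act h (box_act f g).
Proof.
case: g => g pg; rewrite /box_act /=.
move: (inbox_act _ _) (inbox_act _ _); rewrite cube_comp => q1 q2.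
congr exist; exact: bool_irrelevance.
Qed.

Definition box (n : nat) (e : bool) : cSet :=
  @CSet (fun m => {g : Bmor n m | inbox e g}) (@box_act n e)
        (@box_id n e) (@box_comp n e).

Definition box_incl (n : nat) (e : bool) : hom (box n e) (cube n) :=
  @Hom (box n e) (cube n) (fun m g => proj1_sig g) (fun _ _ _ _ => erefl).

(* lifting problems are indexed by n >= 1, k >= 1, written n.+1 and k.+1;
   maps alpha : I^j -> I^k with j >= 1 are written with j.+1. *)
Record UKF (Y X : cSet) (f : hom Y X) := {
  fill : forall (n k : nat) (e : bool)
           (a : hom (prodP (cube k.+1) (cube n.+1)) X)
           (b : hom (prodP (cube k.+1) (box n.+1 e)) Y),
           hcomp f b = hcomp a (prod_map (idh _) (box_incl n.+1 e)) ->
           hom (prodP (cube k.+1) (cube n.+1)) Y;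
  fill_box : forall n k e a b (h : _),
      hcomp (@fill n k e a b h) (prod_map (idh _) (box_incl n.+1 e)) = b;
  fill_base : forall n k e a b (h : _), hcomp f (@fill n k e a b h) = a;
  fill_uniform : forall n k e a b (h : _) (j : nat) (alpha : hom (cube j.+1) (cube k.+1))
      (h' : hcomp f (hcomp b (prod_map alpha (idh _)))
            = hcomp (hcomp a (prod_map alpha (idh _))) (prod_map (idh _) (box_incl n.+1 e))),
      hcomp (@fill n k e a b h) (prod_map alpha (idh _))
      = @fill n j e (hcomp a (prod_map alpha (idh _))) (hcomp b (prod_map alpha (idh _))) h'
}.

Definition UKF_mor (Y X Y' X' : cSet) (f : hom Y X) (g : hom Y' X')
  (u : hom Y Y') (v : hom X X') (s : UKF f) (t : UKF g) : Prop :=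
  forall n k e a b (h : _)
    (h' : hcomp g (hcomp u b)
          = hcomp (hcomp v a) (prod_map (idh _) (box_incl n.+1 e))),
    hcomp u (@fill _ _ _ s n k e a b h) = @fill _ _ _ t n k e (hcomp v a) (hcomp u b) h'.

Record FunFact := {
  E : forall (X Y : cSet), hom X Y -> cSet;
  L : forall (X Y : cSet) (f : hom X Y), hom X (E f);
  R : forall (X Y : cSet) (f : hom X Y), hom (E f) Y;
  RL : forall X Y (f : hom X Y), hcomp (R f) (L f) = f;
  Emap : forall (X Y X' Y' : cSet) (f : hom X Y) (g : hom X' Y')
           (u : hom X X') (v : hom Y Y'), hcomp v f = hcomp g u -> hom (E f) (E g);
  Emap_L : forall X Y X' Y' f g u v (h : _),
      hcomp (@Emap X Y X' Y' f g u v h) (L f) = hcomp (L g) u;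
  Emap_R : forall X Y X' Y' f g u v (h : _),
      hcomp (R g) (@Emap X Y X' Y' f g u v h) = hcomp v (R f);
  Emap_id : forall X Y (f : hom X Y) (h : hcomp (idh Y) f = hcomp f (idh X)),
      Emap h = idh (E f);
  Emap_comp : forall X Y X' Y' X'' Y'' (f : hom X Y) (g : hom X' Y') (k : hom X'' Y'')
      u v u' v' (h1 : hcomp v f = hcomp g u) (h2 : hcomp v' g = hcomp k u')
      (h3 : hcomp (hcomp v' v) f = hcomp k (hcomp u' u)),
      Emap h3 = hcomp (Emap h2) (Emap h1)
}.

Record AWFS := {
  ff :> FunFact;
  (* monad structure on R (endofunctor of cSet^->, unit (L f, 1) : f -> R f) *)
  mu : forall (X Y : cSet) (f : hom X Y), hom (E ff (R ff f)) (E ff f);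
  mu_R : forall X Y (f : hom X Y), hcomp (R ff f) (mu f) = R ff (R ff f);
  mu_unit1 : forall X Y (f : hom X Y), hcomp (mu f) (L ff (R ff f)) = idh _;
  mu_unit2 : forall X Y (f : hom X Y) (h : hcomp (idh Y) f = hcomp (R ff f) (L ff f)),
      hcomp (mu f) (Emap ff h) = idh _;
  mu_assoc : forall X Y (f : hom X Y)
      (h : hcomp (idh Y) (R ff (R ff f)) = hcomp (R ff f) (mu f)),
      hcomp (mu f) (mu (R ff f)) = hcomp (mu f) (Emap ff h);
  mu_nat : forall X Y X' Y' (f : hom X Y) (g : hom X' Y') u v (h : hcomp v f = hcomp g u)
      (h' : hcomp v (R ff f) = hcomp (R ff g) (Emap ff h)),
      hcomp (Emap ff h) (mu f) = hcomp (mu g) (Emap ff h');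
  (* comonad structure on L (endofunctor of cSet^->, counit (1, R f) : L f -> f) *)
  delta : forall (X Y : cSet) (f : hom X Y), hom (E ff f) (E ff (L ff f));
  delta_L : forall X Y (f : hom X Y), hcomp (delta f) (L ff f) = L ff (L ff f);
  delta_counit1 : forall X Y (f : hom X Y), hcomp (R ff (L ff f)) (delta f) = idh _;
  delta_counit2 : forall X Y (f : hom X Y) (h : hcomp (R ff f) (L ff f) = hcomp f (idh X)),
      hcomp (Emap ff h) (delta f) = idh _;
  delta_coassoc : forall X Y (f : hom X Y)
      (h : hcomp (delta f) (L ff f) = hcomp (L ff (L ff f)) (idh X)),
      hcomp (delta (L ff f)) (delta f) = hcomp (Emap ff h) (delta f);
  delta_nat : forall X Y X' Y' (f : hom X Y) (g : hom X' Y') u v (h : hcomp v f = hcomp g u)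
      (h' : hcomp (Emap ff h) (L ff f) = hcomp (L ff g) u),
      hcomp (Emap ff h') (delta f) = hcomp (delta g) (Emap ff h)
}.

(* R-algebra structures on f : X -> Y: squares (s, 1) : R f -> f *)
Record RAlg (W : AWFS) (X Y : cSet) (f : hom X Y) := {
  alg : hom (E W f) X;
  alg_R : hcomp f alg = R W f;
  alg_unit : hcomp alg (L W f) = idh X;
  alg_assoc : forall (h : hcomp (idh Y) (R W f) = hcomp f alg),
      hcomp alg (mu W f) = hcomp alg (Emap W h)
}.

Definition RAlg_mor (W : AWFS) (X Y X' Y' : cSet) (f : hom X Y) (g : hom X' Y')
  (u : hom X X') (v : hom Y Y') (h : hcomp v f = hcomp g u) (s : RAlg W f) (t : RAlg W g) : Prop :=
  hcomp u (alg s) = hcomp (alg t) (Emap W h).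

(* Main.v *)
From Stdlib Require Import FunctionalExtensionality ProofIrrelevance ClassicalEpsilon PropExtensionality.
Require Import Defs.
From mathcomp Require Import all_boot.
Set Implicit Arguments.
Unset Strict Implicit.
Unset Printing Implicit Defensive.

Lemma hom_ext (A B : cSet) (F G : hom A B) : (forall n x, F n x = G n x) -> F = G.
Proof.
case: F G => F HF [G HG] /= H.
have E : F = G.
  apply: functional_extensionality_dep => n; apply: functional_extensionality => x; exact: H.
subst; f_equal; apply: proof_irrelevance.
Qed.

Definition PI k n := prodP (cube k.+1) (cube n.+1).
Definition PB k n e := prodP (cube k.+1) (box n.+1 e).
Definition incl k n e : hom (PB k n e) (PI k n) := prod_map (idh _) (box_incl n.+1 e).
Definition amap j k n (al : hom (cube j.+1) (cube k.+1)) : hom (PI j n) (PI k n) :=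
  prod_map al (idh _).
Definition bmap j k n e (al : hom (cube j.+1) (cube k.+1)) : hom (PB j n e) (PB k n e) :=
  prod_map al (idh _).

Section Terms.
Variables X Y : cSet.

Inductive T : nat -> Type :=
| tinj m : X m -> T m
| tfill m n k (e : bool) (a : hom (PI k n) Y) (b : forall p, PB k n e p -> T p)
    (c : PI k n m) : T m.

Definition actT m p (g : Bmor m p) (t : T m) : T p :=
  match t in T m0 return Bmor m0 p -> T p with
  | tinj _ x => fun g => tinj (act g x)
  | tfill _ n k e a b c => fun g => tfill a b (act g c)
  end g.

Variable f : hom X Y.

Definition P m (t : T m) : Y m :=
  match t with
  | tinj _ x => f _ x
  | tfill _ _ _ _ a _ c => a _ c
  end.

Inductive wf : forall m, T m -> Prop :=
| wf_inj m (x : X m) : wf (tinj x)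
| wf_fill m n k e (a : hom (PI k n) Y) (b : forall p, PB k n e p -> T p) (c : PI k n m) :
   (forall p z, wf (b p z)) ->
   (forall p z, P (b p z) = a p (incl k n e p z)) ->
   (forall p q (g : Bmor p q) z, eqv (b q (act g z)) (actT g (b p z))) ->
   wf (@tfill m n k e a b c)
with eqv : forall m, T m -> T m -> Prop :=
| eqv_refl m (t : T m) : wf t -> eqv t t
| eqv_sym m (t t' : T m) : eqv t t' -> eqv t' t
| eqv_trans m (t1 t2 t3 : T m) : eqv t1 t2 -> eqv t2 t3 -> eqv t1 t3
| eqv_cong m n k e (a : hom (PI k n) Y) (b b' : forall p, PB k n e p -> T p) (c : PI k n m) : wf (@tfill m n k e a b c) -> wf (tfill a b' c) ->
    (forall p z, eqv (b p z) (b' p z)) -> eqv (tfill a b c) (tfill a b' c)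
| eqv_box m n k e (a : hom (PI k n) Y) (b : forall p, PB k n e p -> T p) (z : PB k n e m) : wf (tfill a b (incl k n e m z)) ->
    eqv (tfill a b (incl k n e m z)) (b m z)
| eqv_unif m n k j e (a : hom (PI k n) Y) (b : forall p, PB k n e p -> T p) (al : hom (cube j.+1) (cube k.+1)) (c : PI j n m) :
   wf (tfill a b (amap n al m c)) ->
   eqv (tfill a b (amap n al m c)) (tfill (hcomp a (amap n al)) (fun p z => b p (bmap n e al p z)) c).

Scheme wf_mut := Induction for wf Sort Prop
with eqv_mut := Induction for eqv Sort Prop.
Combined Scheme wf_eqv_mut from wf_mut, eqv_mut.


Lemma actT_id m (t : T m) : actT (Bid m) t = t.
Proof. by case: t => [m0 x|m0 n k e a b c]; rewrite /actT act_id. Qed.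

Lemma actT_comp m p q (g : Bmor m p) (h : Bmor p q) (t : T m) :
  actT (Bcomp h g) t = actT h (actT g t).
Proof. by case: t g => [m' x|m' n k e a b c] g; rewrite /actT act_comp. Qed.

Lemma actT_fill m p (g : Bmor m p) n k e a b c :
  actT g (@tfill m n k e a b c) = tfill a b (act g c).
Proof. by []. Qed.

Lemma P_act m p (g : Bmor m p) (t : T m) : P (actT g t) = act g (P t).
Proof. by case: t g => [m' x|m' n k e a b c] g; rewrite /actT /P natural. Qed.

Definition wfb n k e (a : hom (PI k n) Y) (b : forall p, PB k n e p -> T p) : Prop :=
  [/\ (forall p z, wf (b p z)),
      (forall p z, P (b p z) = a p (incl k n e p z)) &
      (forall p q (g : Bmor p q) z, eqv (b q (act g z)) (actT g (b p z)))].

Definition wfprop m (t : T m) : Prop :=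
  match t with tinj _ _ => True | tfill _ n k e a b c => wfb a b end.

Lemma wf_prop m (t : T m) : wf t -> wfprop t.
Proof. by case=> //= m' n k e a b c H1 H2 H3; split. Qed.

Lemma wf_fill_inv m n k e a b c : wf (@tfill m n k e a b c) -> wfb a b.
Proof. exact: (@wf_prop _ (tfill a b c)). Qed.

Lemma wf_fillP m n k e a b c : wfb a b -> wf (@tfill m n k e a b c).
Proof. by case=> H1 H2 H3; apply: wf_fill. Qed.

Lemma wf_act m p (g : Bmor m p) (t : T m) : wf t -> wf (actT g t).
Proof.
case: t g => [m' x|m' n k e a b c] g H /=; first exact: wf_inj.
by apply: wf_fillP; apply: wf_fill_inv H.
Qed.

Lemma eqv_wf m (t t' : T m) : eqv t t' -> wf t /\ wf t'.
Proof.
elim=> {m t t'}.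
- by move=> m t H.
- by move=> m t t' _ [].
- by move=> m t1 t2 t3 _ [] ? _ _ [].
- by move=> m n k e a b b' c H1 H2.
- move=> m n k e a b z H; split=> //.
  by case: (wf_fill_inv H).
- move=> m n k j e a b al c H; split => //.
  case: (wf_fill_inv H) => H1 H2 H3; apply: wf_fillP; split.
  + by move=> p z; apply: H1.
  + by move=> p z; rewrite H2.
  + move=> p q g z; move: (H3 _ _ g (bmap n e al p z)); by rewrite -natural.
Qed.

Lemma eqv_refl' m (t : T m) : wf t -> eqv t t.
Proof. exact: eqv_refl. Qed.

Lemma eqv_act m p (g : Bmor m p) (t t' : T m) : eqv t t' -> eqv (actT g t) (actT g t').
Proof.
move=> H; elim: H p g => {m t t'}.
- by move=> m t H p g; apply: eqv_refl; apply: wf_act.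
- by move=> m t t' _ IH p g; apply: eqv_sym.
- by move=> m t1 t2 t3 _ IH1 _ IH2 p g; apply: eqv_trans (IH1 p g) (IH2 p g).
- move=> m n k e a b b' c H1 H2 H3 _ p g; rewrite !actT_fill.
  apply: eqv_cong => //; apply: wf_fillP; [exact: wf_fill_inv H1 | exact: wf_fill_inv H2].
- move=> m n k e a b z H p g; rewrite actT_fill.
  have -> : act g (incl k n e m z) = incl k n e p (act g z) by rewrite natural.
  case: (wf_fill_inv H) => H1 H2 H3.
  apply: eqv_trans (H3 _ _ _ _); apply: eqv_box; apply: wf_fillP; exact: wf_fill_inv H.
- move=> m n k j e a b al c H p g; rewrite !actT_fill.
  have -> : act g (amap n al m c) = amap n al p (act g c) by rewrite natural.
  apply: eqv_unif; apply: wf_fillP; exact: wf_fill_inv H.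
Qed.

Lemma P_eqv m (t t' : T m) : eqv t t' -> P t = P t'.
Proof.
elim=> {m t t'} //.
- by move=> m t1 t2 t3 _ -> _ ->.
- move=> m n k e a b z H /=; case: (wf_fill_inv H) => _ H2 _; by rewrite H2.
Qed.

End Terms.

Section Quot.
Variable A : Type.
Variable R : A -> A -> Prop.
Hypothesis Rsym : forall x y, R x y -> R y x.
Hypothesis Rtrans : forall x y z, R x y -> R y z -> R x z.

Definition Q := {S : A -> Prop | exists t, R t t /\ S = R t}.
Definition cls (t : A) (w : R t t) : Q := exist _ (R t) (ex_intro _ t (conj w erefl)).
Arguments cls t w : clear implicits.
Definition repr (q : Q) : A := proj1_sig (constructive_indefinite_description _ (proj2_sig q)).

Lemma repr_spec q : R (repr q) (repr q) /\ proj1_sig q = R (repr q).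
Proof. rewrite /repr; case: (constructive_indefinite_description _ _) => t /= [H1 H2]; done. Qed.

Lemma repr_R q : R (repr q) (repr q).
Proof. by case: (repr_spec q). Qed.

Lemma Q_ext (q q' : Q) : proj1_sig q = proj1_sig q' -> q = q'.
Proof. case: q q' => S HS [S' HS'] /= E; subst; f_equal; apply: proof_irrelevance. Qed.

Lemma cls_repr q w : cls (repr q) w = q.
Proof. apply: Q_ext => /=; by case: (repr_spec q). Qed.

Lemma cls_eq t t' w w' : R t t' -> cls t w = cls t' w'.
Proof.
move=> H; apply: Q_ext => /=.
apply: functional_extensionality => x; apply: propositional_extensionality; split.
- by move=> H'; apply: Rtrans (Rsym H) H'.
- by move=> H'; apply: Rtrans H H'.
Qed.

Lemma cls_inj t t' w w' : cls t w = cls t' w' -> R t t'.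
Proof. move=> E; have E' := f_equal (@proj1_sig _ _) E; simpl in E'. by rewrite E'. Qed.

Lemma repr_cls t w : R (repr (cls t w)) t.
Proof.
have [H1 H2] := repr_spec (cls t w); simpl in H2.
by rewrite -H2.
Qed.

Lemma Q_ind (Pr : Q -> Prop) : (forall t w, Pr (cls t w)) -> forall q, Pr q.
Proof. move=> H q; rewrite -(cls_repr (repr_R q)); apply: H. Qed.

End Quot.
Arguments cls {A R} t w.
Arguments repr {A R} q.

Section EF.
Variables X Y : cSet.
Variable f : hom X Y.

Notation TT := (T X Y).
Notation wf := (@wf X Y f).
Notation eqv := (@eqv X Y f).

Definition EQ m := Q (@eqv m).

Definition clsE m (t : TT m) (w : wf t) : EQ m := cls t (eqv_refl w).
Definition reprE m (q : EQ m) : TT m := repr q.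

Lemma eqsym m (t t' : TT m) : eqv t t' -> eqv t' t.
Proof. exact: eqv_sym. Qed.
Lemma eqtrans m (t1 t2 t3 : TT m) : eqv t1 t2 -> eqv t2 t3 -> eqv t1 t3.
Proof. exact: eqv_trans. Qed.

Lemma wf_repr m (q : EQ m) : wf (reprE q).
Proof. by case: (eqv_wf (repr_R q)). Qed.

Lemma clsE_eq m (t t' : TT m) (w : wf t) (w' : wf t') : eqv t t' -> clsE w = clsE w'.
Proof. exact: (cls_eq (@eqsym m) (@eqtrans m)). Qed.

Lemma clsE_inj m (t t' : TT m) (w : wf t) (w' : wf t') : clsE w = clsE w' -> eqv t t'.
Proof. exact: cls_inj. Qed.

Lemma clsE_repr m (q : EQ m) (w : wf (reprE q)) : clsE w = q.
Proof. exact: cls_repr. Qed.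

Lemma reprE_cls m (t : TT m) (w : wf t) : eqv (reprE (clsE w)) t.
Proof. exact: (repr_cls (eqv_refl w)). Qed.

Lemma EQ_ind (Pr : forall m, EQ m -> Prop) :
  (forall m (t : TT m) (w : wf t), Pr m (clsE w)) -> forall m q, Pr m q.
Proof. move=> H m q; rewrite -(clsE_repr (wf_repr q)); apply: H. Qed.

Definition actQ m p (g : Bmor m p) (q : EQ m) : EQ p :=
  clsE (wf_act g (wf_repr q)).

Lemma actQ_id m (q : EQ m) : actQ (Bid m) q = q.
Proof.
rewrite /actQ; transitivity (clsE (wf_repr q)); last exact: clsE_repr.
apply: clsE_eq; rewrite actT_id; apply: eqv_refl; exact: wf_repr.
Qed.

Lemma actQ_comp m n p (g : Bmor m n) (h : Bmor n p) (q : EQ m) :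
  actQ (Bcomp h g) q = actQ h (actQ g q).
Proof.
rewrite /actQ; apply: clsE_eq; rewrite actT_comp; apply: eqv_act.
apply: eqsym; exact: reprE_cls.
Qed.

Definition EE : cSet := @CSet EQ actQ actQ_id actQ_comp.

Lemma actQ_cls m p (g : Bmor m p) (t : TT m) (w : wf t) (w' : wf (actT g t)) :
  @act EE m p g (clsE w) = clsE w'.
Proof. apply: clsE_eq; apply: eqv_act; exact: reprE_cls. Qed.

Lemma Lf_natural m n (g : Bmor m n) (x : X m) :
  clsE (wf_inj f (act g x)) = @act EE m n g (clsE (wf_inj f x)).
Proof. symmetry; exact: actQ_cls. Qed.

Definition Lf : hom X EE := @Hom X EE (fun m x => clsE (wf_inj f x)) Lf_natural.

Lemma Rf_natural m n (g : Bmor m n) (q : EE m) :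
  P f (reprE (act g q)) = act g (P f (reprE q)).
Proof.
rewrite -P_act; apply: P_eqv; exact: reprE_cls.
Qed.

Definition Rf : hom EE Y := @Hom EE Y (fun m q => P f (reprE q)) Rf_natural.

Lemma Rf_cls m (t : TT m) (w : wf t) : Rf m (clsE w) = P f t.
Proof. apply: P_eqv; exact: reprE_cls. Qed.

Lemma RL_f : hcomp Rf Lf = f.
Proof. apply: hom_ext => m x; exact: (Rf_cls (wf_inj f x)). Qed.

Section Fill.
Variables (n k : nat) (e : bool) (a : hom (PI k n) Y) (B : hom (PB k n e) EE).
Hypothesis h : hcomp Rf B = hcomp a (incl k n e).

Definition breps p (z : PB k n e p) : TT p := reprE (B p z).

Lemma wfb_breps : wfb f a breps.
Proof.
split.
- move=> p z; exact: wf_repr.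
- move=> p z; exact: (f_equal (fun F : hom _ _ => F p z) h).
- move=> p q g z; rewrite /breps natural.
  rewrite -{1}(clsE_repr (wf_repr (B p z))) (actQ_cls _ (wf_act g (wf_repr (B p z)))).
  exact: reprE_cls.
Qed.

Definition wf_fillF m (c : PI k n m) : wf (tfill a breps c) := wf_fillP c wfb_breps.

Lemma fillF_natural m p (g : Bmor m p) (c : PI k n m) :
  clsE (wf_fillF (act g c)) = @act EE m p g (clsE (wf_fillF c)).
Proof. symmetry; exact: actQ_cls. Qed.

Definition fillF : hom (PI k n) EE := @Hom (PI k n) EE (fun m c => clsE (wf_fillF c)) fillF_natural.

Lemma fillF_box : hcomp fillF (incl k n e) = B.
Proof.
apply: hom_ext => m z.
transitivity (clsE (wf_repr (B m z))); last exact: clsE_repr.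
apply: clsE_eq; apply: eqv_box; exact: wf_fillF.
Qed.

Lemma fillF_base : hcomp Rf fillF = a.
Proof. apply: hom_ext => m c; exact: Rf_cls. Qed.

End Fill.

Lemma fillF_congr n k e a a' B B' h h' :
  a = a' -> B = B' -> @fillF n k e a B h = @fillF n k e a' B' h'.
Proof. move=> E1 E2; subst; f_equal; apply: proof_irrelevance. Qed.

Lemma fillF_unif n k j e a B h (al : hom (cube j.+1) (cube k.+1)) h' :
  hcomp (@fillF n k e a B h) (amap n al)
  = @fillF n j e (hcomp a (amap n al)) (hcomp B (bmap n e al)) h'.
Proof. apply: hom_ext => m c; apply: clsE_eq; apply: eqv_unif; exact: wf_fillF. Qed.

End EF.

Lemma hcompA (A B C D : cSet) (h1 : hom C D) (h2 : hom B C) (h3 : hom A B) :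
  hcomp (hcomp h1 h2) h3 = hcomp h1 (hcomp h2 h3).
Proof. exact: hom_ext. Qed.

Lemma hcomp_id_l (A B : cSet) (h1 : hom A B) : hcomp (idh B) h1 = h1.
Proof. exact: hom_ext. Qed.
Lemma hcomp_id_r (A B : cSet) (h1 : hom A B) : hcomp h1 (idh A) = h1.
Proof. exact: hom_ext. Qed.

Section Emap.
Variables X Y X' Y' : cSet.
Variables (u : hom X X') (v : hom Y Y').

Fixpoint emapT m (t : T X Y m) : T X' Y' m :=
  match t with
  | tinj _ x => tinj Y' (u _ x)
  | tfill _ n k e a b c => tfill (hcomp v a) (fun p z => emapT (b p z)) c
  end.

Lemma emapT_act m p (g : Bmor m p) (t : T X Y m) : emapT (actT g t) = actT g (emapT t).
Proof. by case: t g => [m' x|m' n k e a b c] g //=; rewrite natural. Qed.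

Variables (f : hom X Y) (f' : hom X' Y').
Hypothesis h : hcomp v f = hcomp f' u.

Lemma P_emap m (t : T X Y m) : P f' (emapT t) = v m (P f t).
Proof.
case: t => [m' x|m' n k e a b c] //=.
exact: (f_equal (fun F : hom _ _ => F m' x) (esym h)).
Qed.

Lemma emap_wf_eqv :
  (forall m t, wf f t -> wf f' (@emapT m t)) /\
  (forall m t t', eqv f t t' -> eqv f' (@emapT m t) (emapT t')).
Proof.
apply: (wf_eqv_mut (P := fun m t _ => wf f' (@emapT m t))
                   (P0 := fun m t t' _ => eqv f' (@emapT m t) (emapT t'))).
- move=> m x; exact: wf_inj.
- move=> m n k e a b c w IHw e0 e1 IHe /=; apply: wf_fillP; split.
  + exact: IHw.
  + by move=> p z; rewrite P_emap e0.
  + by move=> p q g z; rewrite -emapT_act; apply: IHe.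
- by move=> m t w IH; apply: eqv_refl.
- by move=> m t t' _ IH; apply: eqv_sym.
- by move=> m t1 t2 t3 _ IH1 _ IH2; apply: eqv_trans IH1 IH2.
- by move=> m n k e a b b' c w IH w' IH' e0 IHe /=; apply: eqv_cong.
- by move=> m n k e a b z w IH /=; apply: eqv_box.
- move=> m n k j e a b al c w IH /=; rewrite -hcompA; exact: (eqv_unif IH).
Qed.

Lemma wf_emap m (t : T X Y m) : wf f t -> wf f' (emapT t).
Proof. exact: (proj1 emap_wf_eqv). Qed.
Lemma eqv_emap m (t t' : T X Y m) : eqv f t t' -> eqv f' (emapT t) (emapT t').
Proof. exact: (proj2 emap_wf_eqv). Qed.

Lemma EmapQ_natural m p (g : Bmor m p) (q : EE f m) :
  clsE (wf_emap (wf_repr (act g q))) = @act (EE f') m p g (clsE (wf_emap (wf_repr q))).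
Proof.
symmetry; rewrite (actQ_cls _ (wf_act g (wf_emap (wf_repr q)))); apply: clsE_eq.
rewrite -emapT_act; apply: eqv_emap; apply: eqsym; exact: reprE_cls.
Qed.

Definition EmapQ : hom (EE f) (EE f') :=
  @Hom (EE f) (EE f') (fun m q => clsE (wf_emap (wf_repr q))) EmapQ_natural.

Lemma EmapQ_cls m (t : T X Y m) (w : wf f t) (w' : wf f' (emapT t)) :
  EmapQ m (clsE w) = clsE w'.
Proof. apply: clsE_eq; apply: eqv_emap; exact: reprE_cls. Qed.

End Emap.

Lemma emapT_id (X Y : cSet) m (t : T X Y m) : emapT (idh X) (idh Y) t = t.
Proof.
elim: t => [m' x|m' n k e a b IH c] //=.
rewrite hcomp_id_l; congr tfill.
apply: functional_extensionality_dep => p; apply: functional_extensionality => z; exact: IH.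
Qed.

Lemma emapT_comp (X Y X' Y' X'' Y'' : cSet) (u : hom X X') (v : hom Y Y')
  (u' : hom X' X'') (v' : hom Y' Y'') m (t : T X Y m) :
  emapT (hcomp u' u) (hcomp v' v) t = emapT u' v' (emapT u v t).
Proof.
elim: t => [m' x|m' n k e a b IH c] //=.
rewrite hcompA; congr tfill.
apply: functional_extensionality_dep => p; apply: functional_extensionality => z; exact: IH.
Qed.

Lemma emapT_fill X Y X' Y' (u : hom X X') (v : hom Y Y') m n k e a b c :
  emapT u v (@tfill X Y m n k e a b c) = tfill (hcomp v a) (fun p z => emapT u v (b p z)) c.
Proof. by []. Qed.

Section EmapLaws.
Variables X Y X' Y' : cSet.
Variables (f : hom X Y) (g : hom X' Y') (u : hom X X') (v : hom Y Y').
Hypothesis h : hcomp v f = hcomp g u.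

Lemma EmapQ_L : hcomp (EmapQ h) (Lf f) = hcomp (Lf g) u.
Proof. apply: hom_ext => m x; exact: EmapQ_cls. Qed.

Lemma EmapQ_R : hcomp (Rf g) (EmapQ h) = hcomp v (Rf f).
Proof.
apply: hom_ext => m q.
change (Rf g m (clsE (wf_emap h (wf_repr q))) = v m (P f (reprE q))).
rewrite Rf_cls; exact: P_emap.
Qed.
End EmapLaws.

Lemma EmapQ_id (X Y : cSet) (f : hom X Y) (h : hcomp (idh Y) f = hcomp f (idh X)) :
  EmapQ h = idh (EE f).
Proof.
apply: hom_ext => m q.
change (clsE (wf_emap h (wf_repr q)) = q).
transitivity (clsE (wf_repr q)); last exact: clsE_repr.
apply: clsE_eq; rewrite emapT_id; apply: eqv_refl; exact: wf_repr.
Qed.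

Lemma EmapQ_comp X Y X' Y' X'' Y'' (f : hom X Y) (g : hom X' Y') (k : hom X'' Y'')
      u v u' v' (h1 : hcomp v f = hcomp g u) (h2 : hcomp v' g = hcomp k u')
      (h3 : hcomp (hcomp v' v) f = hcomp k (hcomp u' u)) :
      EmapQ h3 = hcomp (EmapQ h2) (EmapQ h1).
Proof.
apply: hom_ext => m q.
change (clsE (wf_emap h3 (wf_repr q)) = EmapQ h2 m (clsE (wf_emap h1 (wf_repr q)))).
rewrite (EmapQ_cls h2 _ (wf_emap h2 (wf_emap h1 (wf_repr q)))).
apply: clsE_eq; rewrite emapT_comp; apply: eqv_refl.
exact: (wf_emap h2 (wf_emap h1 (wf_repr q))).
Qed.

Lemma EmapQ_cls' X Y X' Y' (f : hom X Y) (g : hom X' Y') u v (h : hcomp v f = hcomp g u)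
  m (t : T X Y m) (w : wf f t) : EmapQ h m (clsE w) = clsE (wf_emap h w).
Proof. exact: EmapQ_cls. Qed.

Section Mu.
Variables X Y : cSet.
Variable f : hom X Y.

Fixpoint muT m (t : T (EE f) Y m) : T X Y m :=
  match t with
  | tinj _ q => reprE q
  | tfill _ n k e a b c => tfill a (fun p z => muT (b p z)) c
  end.

Lemma P_mu m (t : T (EE f) Y m) : P f (muT t) = P (Rf f) t.
Proof. by case: t. Qed.

Lemma mu_wf_eqv :
  (forall m t, wf (Rf f) t -> wf f (@muT m t) /\
      forall p (g : Bmor m p), eqv f (muT (actT g t)) (actT g (muT t))) /\
  (forall m t t', eqv (Rf f) t t' -> eqv f (@muT m t) (muT t')).
Proof.
apply: (wf_eqv_mut (P := fun m t _ => wf f (@muT m t) /\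
      forall p (g : Bmor m p), eqv f (muT (actT g t)) (actT g (muT t)))
                   (P0 := fun m t t' _ => eqv f (@muT m t) (muT t'))).
- move=> m q; split; first exact: wf_repr.
  move=> p g /=.
  have w := wf_act g (wf_repr q).
  exact: (reprE_cls (wf_act g (wf_repr q))).
- move=> m n k e a b c w IHw e0 e1 IHe.
  have W : wf f (muT (tfill a b c)).
    apply: wf_fillP; split.
    + by move=> p z; case: (IHw p z).
    + by move=> p z; rewrite P_mu e0.
    + move=> p q g z; apply: eqv_trans (IHe p q g z) _; by case: (IHw p z).
  split=> // p g; apply: eqv_refl; exact: (wf_act g W).
- by move=> m t w [IH _]; apply: eqv_refl.
- by move=> m t t' _ IH; apply: eqv_sym.
- by move=> m t1 t2 t3 _ IH1 _ IH2; apply: eqv_trans IH1 IH2.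
- by move=> m n k e a b b' c w [IH _] w' [IH' _] e0 IHe /=; apply: eqv_cong.
- by move=> m n k e a b z w [IH _] /=; apply: eqv_box.
- move=> m n k j e a b al c w [IH _] /=; exact: (eqv_unif IH).
Qed.

Lemma wf_mu m (t : T (EE f) Y m) : wf (Rf f) t -> wf f (muT t).
Proof. by move=> w; case: (proj1 mu_wf_eqv m t w). Qed.
Lemma mu_act m p (g : Bmor m p) (t : T (EE f) Y m) :
  wf (Rf f) t -> eqv f (muT (actT g t)) (actT g (muT t)).
Proof. by move=> w; case: (proj1 mu_wf_eqv m t w). Qed.
Lemma eqv_mu m (t t' : T (EE f) Y m) : eqv (Rf f) t t' -> eqv f (muT t) (muT t').
Proof. exact: (proj2 mu_wf_eqv). Qed.

Lemma muQ_natural m p (g : Bmor m p) (q : EE (Rf f) m) :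
  clsE (wf_mu (wf_repr (act g q))) = @act (EE f) m p g (clsE (wf_mu (wf_repr q))).
Proof.
symmetry; rewrite (actQ_cls _ (wf_act g (wf_mu (wf_repr q)))); apply: clsE_eq.
apply: eqv_trans (eqv_sym (mu_act g (wf_repr q))) _.
apply: eqv_mu; apply: eqv_sym; exact: reprE_cls.
Qed.

Definition muQ : hom (EE (Rf f)) (EE f) :=
  @Hom (EE (Rf f)) (EE f) (fun m q => clsE (wf_mu (wf_repr q))) muQ_natural.

Lemma muQ_cls m (t : T (EE f) Y m) (w : wf (Rf f) t) : muQ m (clsE w) = clsE (wf_mu w).
Proof. apply: clsE_eq; apply: eqv_mu; exact: reprE_cls. Qed.

End Mu.

Section MuLaws.
Variables X Y : cSet.
Variable f : hom X Y.

Lemma muQ_R : hcomp (Rf f) (muQ f) = Rf (Rf f).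
Proof.
apply: hom_ext => m q.
change (Rf f m (clsE (wf_mu (wf_repr q))) = P (Rf f) (reprE q)).
rewrite Rf_cls; exact: P_mu.
Qed.

Lemma muQ_unit1 : hcomp (muQ f) (Lf (Rf f)) = idh _.
Proof.
apply: hom_ext => m q.
change (muQ f m (clsE (wf_inj (Rf f) q)) = q).
rewrite muQ_cls; exact: clsE_repr.
Qed.

Lemma mu_emapL m (t : T X Y m) (h : hcomp (idh Y) f = hcomp (Rf f) (Lf f)) :
  wf f t -> eqv f (muT (emapT (Lf f) (idh Y) t)) t.
Proof.
elim=> {m t}.
- move=> m x /=; exact: reprE_cls.
- move=> m n k e a b c w IH e0 e1 /=; rewrite hcomp_id_l.
  apply: eqv_cong => //; last exact: wf_fillP.
  have w' := wf_mu (wf_emap h (wf_fillP c (And3 w e0 e1))).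
  by rewrite /= hcomp_id_l in w'.
Qed.

Lemma muQ_unit2 (h : hcomp (idh Y) f = hcomp (Rf f) (Lf f)) :
  hcomp (muQ f) (EmapQ h) = idh _.
Proof.
apply: hom_ext; apply: EQ_ind => m t w.
change (muQ f m (EmapQ h m (clsE w)) = clsE w).
rewrite EmapQ_cls' muQ_cls; apply: clsE_eq; exact: mu_emapL.
Qed.

Lemma mu_assocT m (t : T (EE (Rf f)) Y m) :
  wf (Rf (Rf f)) t ->
  eqv f (muT (muT t)) (muT (emapT (muQ f) (idh Y) t)).
Proof.
elim=> {m t}.
- move=> m Q /=.
  apply: eqv_sym; exact: reprE_cls.
- move=> m n k e a b c w IH e0 e1 /=; rewrite hcomp_id_l.
  apply: eqv_cong => //.
  + exact: (wf_mu (wf_mu (wf_fillP c (And3 w e0 e1)))).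
  + have h : hcomp (idh Y) (Rf (Rf f)) = hcomp (Rf f) (muQ f) by rewrite muQ_R hcomp_id_l.
    have w' := wf_mu (wf_emap h (wf_fillP c (And3 w e0 e1))).
    by rewrite /= hcomp_id_l in w'.
Qed.

Lemma muQ_assoc (h : hcomp (idh Y) (Rf (Rf f)) = hcomp (Rf f) (muQ f)) :
  hcomp (muQ f) (muQ (Rf f)) = hcomp (muQ f) (EmapQ h).
Proof.
apply: hom_ext; apply: EQ_ind => m t w.
change (muQ f m (muQ (Rf f) m (clsE w)) = muQ f m (EmapQ h m (clsE w))).
rewrite EmapQ_cls' !muQ_cls; apply: clsE_eq; exact: mu_assocT.
Qed.

End MuLaws.

Lemma mu_natT X Y X' Y' (f : hom X Y) (g : hom X' Y') u v (h : hcomp v f = hcomp g u)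
  m (t : T (EE f) Y m) :
  wf (Rf f) t ->
  eqv g (emapT u v (muT t)) (muT (emapT (EmapQ h) v t)).
Proof.
elim=> {m t}.
- move=> m q /=.
  apply: eqv_sym; exact: reprE_cls.
- move=> m n k e a b c w IH e0 e1 /=.
  have h' : hcomp v (Rf f) = hcomp (Rf g) (EmapQ h) by rewrite EmapQ_R.
  apply: eqv_cong => //.
  + have w' := wf_emap h (wf_mu (wf_fillP c (And3 w e0 e1))); exact: w'.
  + have w' := wf_mu (wf_emap h' (wf_fillP c (And3 w e0 e1))); exact: w'.
Qed.

Lemma muQ_nat X Y X' Y' (f : hom X Y) (g : hom X' Y') u v (h : hcomp v f = hcomp g u)
  (h' : hcomp v (Rf f) = hcomp (Rf g) (EmapQ h)) :
  hcomp (EmapQ h) (muQ f) = hcomp (muQ g) (EmapQ h').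
Proof.
apply: hom_ext; apply: EQ_ind => m t w.
change (EmapQ h m (muQ f m (clsE w)) = muQ g m (EmapQ h' m (clsE w))).
rewrite EmapQ_cls' !muQ_cls EmapQ_cls'; apply: clsE_eq; exact: mu_natT.
Qed.

Definition g0fun (n m : nat) (e : bool) (i : 'I_(n.+3)) : 'I_(m.+2) :=
  if (i : nat) == 0 then bot m else if (i : nat) == n.+2 then top m else endpt m (~~ e).

Lemma g0_proof n m e : (g0fun m e (bot n.+1) == bot m) && (g0fun m e (top n.+1) == top m).
Proof. by rewrite /g0fun /= eqxx. Qed.

Definition g0 n m e : Bmor n.+1 m := exist _ (g0fun m e) (g0_proof n m e).

Lemma g0_inbox n m e : inbox e (g0 n m e).
Proof.
apply/existsP; exists (inord 1); apply/existsP; exists (~~ e).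
rewrite inordK // /=. rewrite /g0fun. rewrite inordK //= eqxx andbT.
by case: e.
Qed.

Definition z0 k n e m (c : PI k n m) : PB k n e m := (c.1, exist _ (g0 n m e) (g0_inbox n m e)).

Section Delta.
Variables X Y : cSet.
Variable f : hom X Y.

Section ClsFill.
Variables (n k : nat) (e : bool) (a : hom (PI k n) Y) (b : forall p, PB k n e p -> T X Y p).
Variable w : wfb f a b.

Lemma clsfill_natural m p (g : Bmor m p) (c : PI k n m) :
  clsE (wf_fillP (act g c) w) = @act (EE f) m p g (clsE (wf_fillP c w)).
Proof. symmetry; exact: actQ_cls. Qed.

Definition clsfill : hom (PI k n) (EE f) :=
  @Hom (PI k n) (EE f) (fun m c => clsE (wf_fillP c w)) clsfill_natural.
End ClsFill.

Lemma clsfill_eq n k e a a' b b' w w' :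
  (forall m (c : PI k n m), eqv f (tfill a b c) (tfill a' b' c)) ->
  @clsfill n k e a b w = @clsfill n k e a' b' w'.
Proof. move=> H; apply: hom_ext => m c; apply: clsE_eq; exact: H. Qed.

Fixpoint deltaT m (t : T X Y m) {struct t} : T X (EE f) m :=
  match t with
  | tinj _ x => tinj (EE f) x
  | tfill m0 n k e a b c =>
      match excluded_middle_informative (wfb f a b) with
      | left w => tfill (clsfill w) (fun p z => deltaT (b p z)) c
      | right _ => deltaT (b m0 (z0 e c))
      end
  end.

Lemma deltaT_fill m n k e a b (c : PI k n m) (w : wfb f a b) :
  deltaT (@tfill _ _ m n k e a b c) = tfill (clsfill w) (fun p z => deltaT (b p z)) c.
Proof.
rewrite /=; case: excluded_middle_informative => [w'|nw]; last by [].
by rewrite (proof_irrelevance _ w w').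
Qed.

Lemma deltaT_act m p (g : Bmor m p) (t : T X Y m) :
  wf f t -> deltaT (actT g t) = actT g (deltaT t).
Proof.
case: t g => [m0 x|m0 n k e a b c] g w; first by [].
have w' := wf_fill_inv w.
by rewrite (deltaT_fill _ w') actT_fill (deltaT_fill _ w').
Qed.

Lemma delta_wf_eqv :
  (forall m t, wf f t -> wf (Lf f) (@deltaT m t) /\
      forall w : wf f t, P (Lf f) (deltaT t) = clsE w) /\
  (forall m t t', eqv f t t' -> eqv (Lf f) (@deltaT m t) (deltaT t')).
Proof.
apply: (wf_eqv_mut (P := fun m t _ => wf (Lf f) (@deltaT m t) /\
      forall w : wf f t, P (Lf f) (deltaT t) = clsE w)
                   (P0 := fun m t t' _ => eqv (Lf f) (@deltaT m t) (deltaT t'))).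
- move=> m x; split; first exact: wf_inj.
  move=> w; apply: clsE_eq; apply: eqv_refl; exact: wf_inj.
- move=> m n k e a b c w IHw e0 e1 IHe.
  have W : wfb f a b by split.
  rewrite (deltaT_fill _ W); split.
  + apply: wf_fillP; split.
    * by move=> p z; case: (IHw p z).
    * move=> p z; case: (IHw p z) => _ ->; apply: clsE_eq.
      apply: eqv_sym; apply: eqv_box; exact: wf_fillP.
    * move=> p q g z; apply: eqv_trans (IHe p q g z) _.
      rewrite deltaT_act; last exact: w.
      apply: eqv_refl; apply: wf_act; by case: (IHw p z).
  + move=> w'; apply: clsE_eq; apply: eqv_refl; exact: wf_fillP.
- by move=> m t w [IH _]; apply: eqv_refl.
- by move=> m t t' _ IH; apply: eqv_sym.
- by move=> m t1 t2 t3 _ IH1 _ IH2; apply: eqv_trans IH1 IH2.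
- move=> m n k e a b b' c w [IH _] w' [IH' _] e0 IHe.
  move: IH IH'.
  rewrite (deltaT_fill _ (wf_fill_inv w)) (deltaT_fill _ (wf_fill_inv w')) => IH IH'.
  have E : clsfill (wf_fill_inv w) = clsfill (wf_fill_inv w').
    apply: clsfill_eq => m' c'; apply: eqv_cong; [exact: wf_fillP (wf_fill_inv w) | exact: wf_fillP (wf_fill_inv w') | exact: e0].
  move: IH; rewrite E => IH.
  by apply: eqv_cong.
- move=> m n k e a b z w [IH _].
  move: IH; rewrite (deltaT_fill _ (wf_fill_inv w)) => IH.
  exact: eqv_box.
- move=> m n k j e a b al c w [IH _].
  have w2 : wf f (tfill (hcomp a (amap n al)) (fun p z => b p (bmap n e al p z)) c).
    by case: (eqv_wf (eqv_unif w)).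
  move: IH; rewrite (deltaT_fill _ (wf_fill_inv w)) (deltaT_fill _ (wf_fill_inv w2)) => IH.
  have E : hcomp (clsfill (wf_fill_inv w)) (amap n al) = clsfill (wf_fill_inv w2).
    apply: hom_ext => m' c'; apply: clsE_eq; apply: eqv_unif; exact: wf_fillP (wf_fill_inv w).
  rewrite -E; exact: (eqv_unif IH).
Qed.

Lemma wf_delta m (t : T X Y m) : wf f t -> wf (Lf f) (deltaT t).
Proof. by move=> w; case: (proj1 delta_wf_eqv m t w). Qed.
Lemma P_delta m (t : T X Y m) (w : wf f t) : P (Lf f) (deltaT t) = clsE w.
Proof. by case: (proj1 delta_wf_eqv m t w). Qed.
Lemma eqv_delta m (t t' : T X Y m) : eqv f t t' -> eqv (Lf f) (deltaT t) (deltaT t').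
Proof. exact: (proj2 delta_wf_eqv). Qed.

Lemma deltaQ_natural m p (g : Bmor m p) (q : EE f m) :
  clsE (wf_delta (wf_repr (act g q))) = @act (EE (Lf f)) m p g (clsE (wf_delta (wf_repr q))).
Proof.
symmetry; rewrite (actQ_cls _ (wf_act g (wf_delta (wf_repr q)))); apply: clsE_eq.
rewrite -deltaT_act; last exact: wf_repr.
apply: eqv_delta; apply: eqv_sym; exact: reprE_cls.
Qed.

Definition deltaQ : hom (EE f) (EE (Lf f)) :=
  @Hom (EE f) (EE (Lf f)) (fun m q => clsE (wf_delta (wf_repr q))) deltaQ_natural.

Lemma deltaQ_cls m (t : T X Y m) (w : wf f t) : deltaQ m (clsE w) = clsE (wf_delta w).
Proof. apply: clsE_eq; apply: eqv_delta; exact: reprE_cls. Qed.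

End Delta.

Section DeltaLaws.
Variables X Y : cSet.
Variable f : hom X Y.

Lemma deltaQ_L : hcomp (deltaQ f) (Lf f) = Lf (Lf f).
Proof.
apply: hom_ext => m x.
change (deltaQ f m (clsE (wf_inj f x)) = clsE (wf_inj (Lf f) x)).
rewrite deltaQ_cls; apply: clsE_eq; apply: eqv_refl; exact: wf_inj.
Qed.

Lemma deltaQ_counit1 : hcomp (Rf (Lf f)) (deltaQ f) = idh _.
Proof.
apply: hom_ext; apply: EQ_ind => m t w.
change (Rf (Lf f) m (deltaQ f m (clsE w)) = clsE w).
rewrite deltaQ_cls Rf_cls; exact: P_delta.
Qed.

Lemma hom_Rf_clsfill n k e a b (w : wfb f a b) : hcomp (Rf f) (@clsfill _ _ f n k e a b w) = a.
Proof. apply: hom_ext => m c; exact: Rf_cls. Qed.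

Lemma delta_counit2T (h : hcomp (Rf f) (Lf f) = hcomp f (idh X)) m (t : T X Y m) :
  wf f t -> eqv f (emapT (idh X) (Rf f) (deltaT f t)) t.
Proof.
move=> w0; have W := wf_emap h (wf_delta w0); move: W.
elim: w0 => {m t}.
- move=> m x W; exact: (eqv_refl W).
- move=> m n k e a b c w IH e0 e1.
  have W0 : wfb f a b by split.
  rewrite (deltaT_fill _ W0) /= hom_Rf_clsfill => W.
  apply: eqv_cong => //; first exact: wf_fillP.
  move=> p z; apply: IH; exact: (wf_emap h (wf_delta (w p z))).
Qed.

Lemma deltaQ_counit2 (h : hcomp (Rf f) (Lf f) = hcomp f (idh X)) :
  hcomp (EmapQ h) (deltaQ f) = idh _.
Proof.
apply: hom_ext; apply: EQ_ind => m t w.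
change (EmapQ h m (deltaQ f m (clsE w)) = clsE w).
rewrite deltaQ_cls EmapQ_cls'; apply: clsE_eq; exact: delta_counit2T.
Qed.

Lemma delta_coassocT (h : hcomp (deltaQ f) (Lf f) = hcomp (Lf (Lf f)) (idh X)) m (t : T X Y m) :
  wf f t -> eqv (Lf (Lf f)) (deltaT (Lf f) (deltaT f t)) (emapT (idh X) (deltaQ f) (deltaT f t)).
Proof.
move=> w0; have W1 := wf_delta (wf_delta w0); have W2 := wf_emap h (wf_delta w0).
move: W1 W2; elim: w0 => {m t}.
- move=> m x W1 W2; exact: (eqv_refl W1).
- move=> m n k e a b c w IH e0 e1.
  have W0 : wfb f a b by split.
  have W0'' := wf_delta (wf_fillP c W0).
  rewrite (deltaT_fill _ W0) in W0''.
  have W0' := wf_fill_inv W0''.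
  rewrite (deltaT_fill _ W0).
  rewrite (deltaT_fill _ W0') /= => W1 W2.
  have E : clsfill W0' = hcomp (deltaQ f) (clsfill W0).
    apply: hom_ext => m' c'.
    change (clsE (wf_fillP c' W0') = deltaQ f m' (clsE (wf_fillP c' W0))).
    rewrite deltaQ_cls; apply: clsE_eq; rewrite (deltaT_fill _ W0).
    apply: eqv_refl; exact: wf_fillP.
  move: W1; rewrite E => W1.
  apply: eqv_cong => //.
  move=> p z; apply: IH.
  + exact: (wf_delta (wf_delta (w p z))).
  + exact: (wf_emap h (wf_delta (w p z))).
Qed.

Lemma deltaQ_coassoc (h : hcomp (deltaQ f) (Lf f) = hcomp (Lf (Lf f)) (idh X)) :
  hcomp (deltaQ (Lf f)) (deltaQ f) = hcomp (EmapQ h) (deltaQ f).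
Proof.
apply: hom_ext; apply: EQ_ind => m t w.
change (deltaQ (Lf f) m (deltaQ f m (clsE w)) = EmapQ h m (deltaQ f m (clsE w))).
rewrite !deltaQ_cls EmapQ_cls'; apply: clsE_eq; exact: delta_coassocT.
Qed.

End DeltaLaws.

Lemma delta_natT X Y X' Y' (f : hom X Y) (g : hom X' Y') u v (h : hcomp v f = hcomp g u)
  (h' : hcomp (EmapQ h) (Lf f) = hcomp (Lf g) u) m (t : T X Y m) :
  wf f t -> eqv (Lf g) (emapT u (EmapQ h) (deltaT f t)) (deltaT g (emapT u v t)).
Proof.
move=> w0; have W1 := wf_emap h' (wf_delta w0); have W2 := wf_delta (wf_emap h w0).
move: W1 W2; elim: w0 => {m t}.
- move=> m x W1 W2; exact: (eqv_refl W1).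
- move=> m n k e a b c w IH e0 e1.
  have W0 : wfb f a b by split.
  have W0' := wf_fill_inv (wf_emap h (wf_fillP c W0)).
  rewrite (deltaT_fill _ W0) !emapT_fill.
  rewrite (deltaT_fill _ W0') => W1 W2.
  have E : hcomp (EmapQ h) (clsfill W0) = clsfill W0'.
    apply: hom_ext => m' c'.
    change (EmapQ h m' (clsE (wf_fillP c' W0)) = clsE (wf_fillP c' W0')).
    rewrite EmapQ_cls'; apply: clsE_eq; apply: eqv_refl; exact: wf_fillP.
  move: W1; rewrite E => W1.
  apply: eqv_cong => //.
  move=> p z; apply: IH.
  + exact: (wf_emap h' (wf_delta (w p z))).
  + exact: (wf_delta (wf_emap h (w p z))).
Qed.

Lemma deltaQ_nat X Y X' Y' (f : hom X Y) (g : hom X' Y') u v (h : hcomp v f = hcomp g u)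
  (h' : hcomp (EmapQ h) (Lf f) = hcomp (Lf g) u) :
  hcomp (EmapQ h') (deltaQ f) = hcomp (deltaQ g) (EmapQ h).
Proof.
apply: hom_ext; apply: EQ_ind => m t w.
change (EmapQ h' m (deltaQ f m (clsE w)) = deltaQ g m (EmapQ h m (clsE w))).
rewrite deltaQ_cls !EmapQ_cls' deltaQ_cls; apply: clsE_eq; exact: delta_natT.
Qed.

Definition FF : FunFact :=
  {| E := fun X Y f => EE f;
     L := fun X Y f => Lf f;
     R := fun X Y f => Rf f;
     RL := fun X Y f => RL_f f;
     Emap := fun X Y X' Y' f g u v h => EmapQ h;
     Emap_L := fun X Y X' Y' f g u v h => EmapQ_L h;
     Emap_R := fun X Y X' Y' f g u v h => EmapQ_R h;
     Emap_id := fun X Y f h => EmapQ_id h;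
     Emap_comp := fun X Y X' Y' X'' Y'' f g k u v u' v' h1 h2 h3 => EmapQ_comp h1 h2 h3 |}.

Definition WW : AWFS :=
  {| ff := FF;
     mu := fun X Y f => muQ f;
     mu_R := fun X Y f => muQ_R f;
     mu_unit1 := fun X Y f => muQ_unit1 f;
     mu_unit2 := fun X Y f h => muQ_unit2 h;
     mu_assoc := fun X Y f h => muQ_assoc h;
     mu_nat := fun X Y X' Y' f g u v h h' => muQ_nat h';
     delta := fun X Y f => deltaQ f;
     delta_L := fun X Y f => deltaQ_L f;
     delta_counit1 := fun X Y f => deltaQ_counit1 f;
     delta_counit2 := fun X Y f h => deltaQ_counit2 h;
     delta_coassoc := fun X Y f h => deltaQ_coassoc h;
     delta_nat := fun X Y X' Y' f g u v h h' => deltaQ_nat h' |}.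

Section Interp.
Variables X Y : cSet.
Variable f : hom X Y.
Variable U : UKF f.

Definition Cond n k e (a : hom (PI k n) Y) (B : forall p, PB k n e p -> X p) : Prop :=
  (forall p q (g : Bmor p q) z, B q (act g z) = act g (B p z)) /\
  (forall p z, f p (B p z) = a p (incl k n e p z)).

Definition mkB n k e a B (H : @Cond n k e a B) : hom (PB k n e) X :=
  @Hom (PB k n e) X B (proj1 H).

Lemma mkh n k e a B (H : @Cond n k e a B) :
  hcomp f (mkB H) = hcomp a (prod_map (idh _) (box_incl n.+1 e)).
Proof. apply: hom_ext => p z; exact: (proj2 H). Qed.

Definition fillval n k e (a : hom (PI k n) Y) (B : forall p, PB k n e p -> X p)
  m (d : X m) (c : PI k n m) : X m :=
  match excluded_middle_informative (Cond a B) with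
  | left H => fill U (mkh H) m c
  | right _ => d
  end.

Fixpoint interp m (t : T X Y m) : X m :=
  match t with
  | tinj _ x => x
  | tfill m0 n k e a b c =>
      fillval a (fun p z => interp (b p z)) (interp (b m0 (z0 e c))) c
  end.

Lemma interp_fill m n k e a b c :
  interp (@tfill X Y m n k e a b c) =
  fillval a (fun p z => interp (b p z)) (interp (b m (z0 e c))) c.
Proof. by []. Qed.

Lemma fill_congr n k e a a' b b' h h' :
  a = a' -> b = b' -> @fill _ _ f U n k e a b h = @fill _ _ f U n k e a' b' h'.
Proof. move=> E1 E2; subst; f_equal; apply: proof_irrelevance. Qed.

Lemma fillval_eq n k e a B m d c (Bh : hom (PB k n e) X)
  (h : hcomp f Bh = hcomp a (prod_map (idh _) (box_incl n.+1 e))) :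
  (forall p z, Bh p z = B p z) -> Cond a B ->
  @fillval n k e a B m d c = fill U h m c.
Proof.
move=> E HC; rewrite /fillval; case: excluded_middle_informative => [H|] //.
congr (cmp _ m c); apply: fill_congr => //; apply: hom_ext => p z; by rewrite E.
Qed.

Lemma interp_congr m n k e a b b' c :
  (forall p z, interp (b p z) = interp (b' p z)) ->
  interp (@tfill X Y m n k e a b c) = interp (tfill a b' c).
Proof.
move=> E; rewrite !interp_fill E.
have -> : (fun p z => interp (b p z)) = (fun p z => interp (b' p z)).
  apply: functional_extensionality_dep => p; apply: functional_extensionality => z; exact: E.
by [].
Qed.

Definition wfcond m (t : T X Y m) : Prop :=
  match t with
  | tinj _ _ => True
  | tfill _ n k e a b c => Cond a (fun p z => interp (b p z))
  end.

Lemma interp_wf_eqv :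
  (forall m t, wf f t -> f m (interp t) = P f t /\
     (forall p (g : Bmor m p), interp (actT g t) = act g (interp t)) /\ @wfcond m t) /\
  (forall m t t', eqv f t t' -> @interp m t = interp t').
Proof.
apply: (wf_eqv_mut (P := fun m t _ => f m (interp t) = P f t /\
     (forall p (g : Bmor m p), interp (actT g t) = act g (interp t)) /\ @wfcond m t)
                   (P0 := fun m t t' _ => @interp m t = interp t')).
- move=> m x; split=> //; split=> //; move=> p g; by [].
- move=> m n k e a b c w IHw e0 e1 IHe.
  have HC : Cond a (fun p z => interp (b p z)).
    split.
    + move=> p q g z; rewrite IHe; by case: (IHw p z) => _ [-> _].
    + move=> p z; by case: (IHw p z) => -> _.
  have E : forall m' (c' : PI k n m'), interp (tfill a b c') = fill U (mkh HC) m' c'.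
    move=> m' c'; rewrite interp_fill; exact: fillval_eq.
  split; last split => //.
  + rewrite E; exact: (f_equal (fun F : hom _ _ => F m c) (fill_base U (mkh HC))).
  + move=> p g; rewrite actT_fill !E; exact: natural.
- by [].
- by move=> m t t' _ ->.
- by move=> m t1 t2 t3 _ -> _ ->.
- by move=> m n k e a b b' c w _ w' _ e0 IH; apply: interp_congr.
- move=> m n k e a b z w [_ [_ HC]].
  rewrite interp_fill (fillval_eq _ _ (mkh HC)) //.
  exact: (f_equal (fun F : hom _ _ => F m z) (fill_box U (mkh HC))).
- move=> m n k j e a b al c w [_ [_ HC]].
  have HC' : Cond (hcomp a (amap n al)) (fun p z => interp (b p (bmap n e al p z))).
    split.
    + move=> p q g z; rewrite -(proj1 HC); congr (interp (b q _)); by rewrite natural.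
    + move=> p z; exact: (proj2 HC).
  have h' : hcomp f (hcomp (mkB HC) (bmap n e al))
            = hcomp (hcomp a (amap n al)) (prod_map (idh _) (box_incl n.+1 e)).
    apply: hom_ext => p z; exact: (proj2 HC).
  rewrite !interp_fill (fillval_eq _ _ (mkh HC)) // (fillval_eq _ _ h') //.
  exact: (f_equal (fun F : hom _ _ => F m c) (fill_uniform U (mkh HC) h')).
Qed.

Lemma interp_eqv m (t t' : T X Y m) : eqv f t t' -> interp t = interp t'.
Proof. exact: (proj2 interp_wf_eqv). Qed.
Lemma interp_P m (t : T X Y m) : wf f t -> f m (interp t) = P f t.
Proof. by move=> w; case: (proj1 interp_wf_eqv m t w). Qed.
Lemma interp_act m p (g : Bmor m p) (t : T X Y m) : wf f t -> interp (actT g t) = act g (interp t).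
Proof. by move=> w; case: (proj1 interp_wf_eqv m t w) => _ [H _]. Qed.
Lemma interp_cond m n k e a b c : wf f (@tfill X Y m n k e a b c) -> Cond a (fun p z => interp (b p z)).
Proof. by move=> w; case: (proj1 interp_wf_eqv m _ w) => _ [_ H]. Qed.

Lemma interp_fill_eq m n k e a b c (Bh : hom (PB k n e) X)
  (h : hcomp f Bh = hcomp a (prod_map (idh _) (box_incl n.+1 e))) :
  wf f (@tfill X Y m n k e a b c) -> (forall p z, Bh p z = interp (b p z)) ->
  interp (tfill a b c) = fill U h m c.
Proof. move=> w E; rewrite interp_fill; apply: fillval_eq => //; exact: interp_cond w. Qed.

End Interp.

Section Corr.
Variables X Y : cSet.
Variable f : hom X Y.

Lemma hL n k e (a : hom (PI k n) Y) (b : hom (PB k n e) X)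
  (h : hcomp f b = hcomp a (prod_map (idh _) (box_incl n.+1 e))) :
  hcomp (Rf f) (hcomp (Lf f) b) = hcomp a (incl k n e).
Proof. by rewrite -hcompA RL_f. Qed.

Definition phifill (s : RAlg WW f) n k e (a : hom (PI k n) Y) (b : hom (PB k n e) X)
  (h : hcomp f b = hcomp a (prod_map (idh _) (box_incl n.+1 e))) : hom (PI k n) X :=
  hcomp (alg s) (fillF (hL h)).

Section PhiS.
Variable s : RAlg WW f.

Lemma AU : hcomp (alg s) (Lf f) = idh X.
Proof. exact: (alg_unit s). Qed.
Lemma AR : hcomp f (alg s) = Rf f.
Proof. exact: (alg_R s). Qed.

Lemma phi_box n k e a b h :
  hcomp (@phifill s n k e a b h) (prod_map (idh _) (box_incl n.+1 e)) = b.
Proof.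
rewrite /phifill hcompA.
change (hcomp (alg s) (hcomp (fillF (hL h)) (incl k n e)) = b).
by rewrite fillF_box -hcompA AU hcomp_id_l.
Qed.

Lemma phi_base n k e a b h : hcomp f (@phifill s n k e a b h) = a.
Proof. by rewrite /phifill -hcompA AR fillF_base. Qed.

Lemma phi_unif n k e a b h j (al : hom (cube j.+1) (cube k.+1)) h' :
  hcomp (@phifill s n k e a b h) (prod_map al (idh _))
  = @phifill s n j e (hcomp a (prod_map al (idh _))) (hcomp b (prod_map al (idh _))) h'.
Proof.
apply: hom_ext => m c.
have E1 := fillF_unif (hL h)
   (etrans (f_equal (hcomp (Rf f)) (hcompA (Lf f) b (bmap n e al))) (hL h')).
have E2 := f_equal (fun F : hom _ _ => F m c) E1.
change (alg s m (fillF (hL h) m (amap n al m c)) = alg s m (fillF (hL h') m c)).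
congr (alg s m _); apply: (etrans E2).
congr (cmp _ m c); apply: fillF_congr => //; exact: hcompA.
Qed.

Definition Phi : UKF f :=
  {| fill := @phifill s; fill_box := phi_box; fill_base := phi_base; fill_uniform := phi_unif |}.
End PhiS.

Section PsiU.
Variable U : UKF f.

Lemma algPsi_natural m p (g : Bmor m p) (q : EE f m) :
  interp U (reprE (act g q)) = act g (interp U (reprE q)).
Proof.
rewrite -interp_act; last exact: wf_repr.
apply: interp_eqv; exact: reprE_cls.
Qed.

Definition algPsi : hom (EE f) X := @Hom (EE f) X (fun m q => interp U (reprE q)) algPsi_natural.

Lemma algPsi_cls m (t : T X Y m) (w : wf f t) : algPsi m (clsE w) = interp U t.
Proof. apply: interp_eqv; exact: reprE_cls. Qed.

Lemma psi_R : hcomp f algPsi = R WW f.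
Proof. apply: hom_ext => m q; apply: interp_P; exact: wf_repr. Qed.

Lemma psi_unit : hcomp algPsi (L WW f) = idh X.
Proof. apply: hom_ext => m x; exact: (algPsi_cls (wf_inj f x)). Qed.

Lemma psi_assocT (h : hcomp (idh Y) (R WW f) = hcomp f algPsi) m (t : T (EE f) Y m) :
  wf (Rf f) t -> interp U (muT t) = interp U (emapT algPsi (idh Y) t).
Proof.
elim=> {m t}.
- by move=> m q.
- move=> m n k e a b c w IH e0 e1.
  rewrite /= hcomp_id_l; exact: interp_congr.
Qed.

Lemma psi_assoc : forall (h : hcomp (idh Y) (R WW f) = hcomp f algPsi),
  hcomp algPsi (mu WW f) = hcomp algPsi (Emap WW h).
Proof.
move=> h; apply: hom_ext; apply: EQ_ind => m t w.
change (algPsi m (muQ f m (clsE w)) = algPsi m (EmapQ h m (clsE w))).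
rewrite muQ_cls EmapQ_cls' !algPsi_cls; exact: psi_assocT.
Qed.

Definition Psi : RAlg WW f := @Build_RAlg WW X Y f algPsi psi_R psi_unit psi_assoc.
End PsiU.

End Corr.

Lemma UKF_ext X Y (f : hom X Y) (U V : UKF f) :
  (forall n k e a b h, @fill _ _ f U n k e a b h = @fill _ _ f V n k e a b h) -> U = V.
Proof.
case: U V => [F1 B1 S1 U1] [F2 B2 S2 U2] /= H.
have E : F1 = F2.
  do 6 (apply: functional_extensionality_dep => ?); exact: H.
subst; f_equal; apply: proof_irrelevance.
Qed.

Lemma RAlg_ext X Y (f : hom X Y) (s t : RAlg WW f) : alg s = alg t -> s = t.
Proof.
case: s t => [a1 R1 U1 A1] [a2 R2 U2 A2] /= E; subst; f_equal; apply: proof_irrelevance.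
Qed.

Section Key.
Variables X Y : cSet.
Variable f : hom X Y.
Variables (n k : nat) (e : bool) (a : hom (PI k n) Y) (b : forall p, PB k n e p -> T X Y p).
Variable W0 : wfb f a b.

Lemma W01 p (z : PB k n e p) : wf f (@b p z). Proof. by case: W0. Qed.
Lemma W02 p (z : PB k n e p) : P f (@b p z) = a p (incl k n e p z). Proof. by case: W0. Qed.
Lemma W03 p q (g : Bmor p q) (z : PB k n e p) : eqv f (@b q (act g z)) (actT g (@b p z)).
Proof. by case: W0. Qed.

Lemma bcls_natural p q (g : Bmor p q) (z : PB k n e p) :
  clsE (W01 (act g z)) = @act (EE f) p q g (clsE (W01 z)).
Proof.
rewrite (actQ_cls _ (wf_act g (W01 z))); apply: clsE_eq; exact: W03.
Qed.

Definition bcls : hom (PB k n e) (EE f) :=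
  @Hom (PB k n e) (EE f) (fun p z => clsE (W01 z)) bcls_natural.

Variable s : RAlg WW f.

Lemma hB : hcomp f (hcomp (alg s) bcls) = hcomp a (prod_map (idh _) (box_incl n.+1 e)).
Proof.
apply: hom_ext => p z.
change (f p (alg s p (bcls p z)) = a p (incl k n e p z)).
transitivity (Rf f p (bcls p z)); first exact: (f_equal (fun F : hom _ _ => F p (bcls p z)) (AR s)).
change (Rf f p (clsE (W01 z)) = a p (incl k n e p z)).
rewrite Rf_cls; exact: W02.
Qed.

Lemma alg_fill m (c : PI k n m) :
  alg s m (clsE (wf_fillP c W0)) = phifill s hB m c.
Proof.
pose T' := tfill a (fun p z => tinj Y (bcls p z)) c.
have wT' : wf (Rf f) T'.
  apply: wf_fillP; split.
  - move=> p z; exact: wf_inj.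
  - move=> p z; change (Rf f p (clsE (W01 z)) = a p (incl k n e p z)).
    rewrite Rf_cls; exact: W02.
  - move=> p q g z; change (eqv (Rf f) (tinj Y (bcls q (act g z))) (tinj Y (act g (bcls p z)))).
    rewrite natural; apply: eqv_refl; exact: wf_inj.
have h0 : hcomp (idh Y) (R WW f) = hcomp f (alg s) by rewrite hcomp_id_l AR.
have A := f_equal (fun F : hom (EE (Rf f)) X => F m (clsE wT')) (alg_assoc h0).
change (alg s m (muQ f m (clsE wT')) = alg s m (EmapQ h0 m (clsE wT'))) in A.
rewrite muQ_cls EmapQ_cls' in A.
have E1 : clsE (wf_mu wT') = clsE (wf_fillP c W0).
  apply: clsE_eq; apply: eqv_cong.
  - exact: (wf_mu wT').
  - exact: wf_fillP.
  - move=> p z; exact: reprE_cls.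
rewrite -E1 A; congr (alg s m _).
change (clsE (wf_emap h0 wT') = clsE (wf_fillF (hL hB) c)).
apply: clsE_eq.
have W := wf_emap h0 wT'.
rewrite /T' emapT_fill hcomp_id_l in W *.
apply: eqv_cong; [exact: W | exact: (wf_fillF (hL hB) c) |].
move=> p z; apply: eqv_sym.
exact: (reprE_cls (wf_inj f (alg s p (bcls p z)))).
Qed.

End Key.

Section Cancel.
Variables X Y : cSet.
Variable f : hom X Y.

Lemma interp_phi (s : RAlg WW f) m (t : T X Y m) :
  wf f t -> forall w : wf f t, interp (Phi s) t = alg s m (clsE w).
Proof.
elim=> {m t}.
- move=> m x w.
  change (x = alg s m (clsE w)).
  have E := f_equal (fun F : hom X X => F m x) (AU s).
  change (alg s m (clsE (wf_inj f x)) = x) in E.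
  rewrite -{1}E; congr (alg s m _); apply: clsE_eq; apply: eqv_refl; exact: wf_inj.
- move=> m n k e a b c w IH e0 e1 w'.
  have W0 : wfb f a b by split.
  rewrite (interp_fill_eq (hB W0 s)) //; last first.
    move=> p z; symmetry; exact: IH.
  have -> : clsE w' = clsE (wf_fillP c W0) by apply: clsE_eq; apply: eqv_refl.
  by rewrite alg_fill.
Qed.

Lemma PsiPhi (s : RAlg WW f) : Psi (Phi s) = s.
Proof.
apply: RAlg_ext; apply: hom_ext; apply: EQ_ind => m t w.
change (algPsi (Phi s) m (clsE w) = alg s m (clsE w)).
rewrite algPsi_cls; exact: interp_phi.
Qed.

Lemma PhiPsi (U : UKF f) : Phi (Psi U) = U.
Proof.
apply: UKF_ext => n k e a b h; apply: hom_ext => m c.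
change (algPsi U m (clsE (wf_fillF (hL h) c)) = fill U h m c).
rewrite algPsi_cls; apply: interp_fill_eq; first exact: (wf_fillF (hL h) c).
move=> p z; symmetry.
change (interp U (reprE (clsE (wf_inj f (b p z)))) = b p z).
by rewrite (interp_eqv U (reprE_cls (wf_inj f (b p z)))).
Qed.

End Cancel.

Section Mor.
Variables X Y X' Y' : cSet.
Variables (f : hom X Y) (g : hom X' Y') (u : hom X X') (v : hom Y Y').
Hypothesis h : hcomp v f = hcomp g u.

Lemma EmapQ_fillF n k e (a : hom (PI k n) Y) (B : hom (PB k n e) (EE f)) hB (B' : hom (PB k n e) (EE g)) hB' m c :
  (forall p z, B' p z = EmapQ h p (B p z)) ->
  EmapQ h m (@fillF _ _ f n k e a B hB m c) = @fillF _ _ g n k e (hcomp v a) B' hB' m c.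
Proof.
move=> E.
change (EmapQ h m (clsE (wf_fillF hB c)) = clsE (wf_fillF hB' c)).
rewrite EmapQ_cls'; apply: clsE_eq; apply: eqv_cong.
- exact: (wf_emap h (wf_fillF hB c)).
- exact: wf_fillF.
- move=> p z; rewrite /breps E; apply: eqv_sym; exact: reprE_cls.
Qed.

Lemma mor_fwd (s : RAlg WW f) (t : RAlg WW g) :
  hcomp u (alg s) = hcomp (alg t) (EmapQ h) -> UKF_mor u v (Phi s) (Phi t).
Proof.
move=> Hm n k e a b h0 h'; apply: hom_ext => m c.
change (u m (alg s m (fillF (hL h0) m c)) = alg t m (fillF (hL h') m c)).
transitivity (alg t m (EmapQ h m (fillF (hL h0) m c))).
  exact: (f_equal (fun F : hom (EE f) X' => F m (fillF (hL h0) m c)) Hm).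
congr (alg t m _); apply: EmapQ_fillF => p z.
symmetry; exact: (f_equal (fun F : hom _ _ => F p (b p z)) (EmapQ_L h)).
Qed.

Lemma mor_bwd (s : RAlg WW f) (t : RAlg WW g) :
  UKF_mor u v (Phi s) (Phi t) -> hcomp u (alg s) = hcomp (alg t) (EmapQ h).
Proof.
move=> Hm; apply: hom_ext; apply: EQ_ind => m t0 w0.
change (u m (alg s m (clsE w0)) = alg t m (EmapQ h m (clsE w0))).
move: w0 (w0); elim=> {m t0}.
- move=> m x w.
  have E1 : alg s m (clsE w) = x.
    transitivity (alg s m (clsE (wf_inj f x))).
      by congr (alg s m _); apply: clsE_eq; apply: eqv_refl; exact: wf_inj.
    exact: (f_equal (fun F : hom X X => F m x) (AU s)).
  have E2 : alg t m (EmapQ h m (clsE w)) = u m x.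
    rewrite EmapQ_cls'.
    transitivity (alg t m (clsE (wf_inj g (u m x)))).
      by congr (alg t m _); apply: clsE_eq; apply: eqv_refl; exact: wf_inj.
    exact: (f_equal (fun F : hom X' X' => F m (u m x)) (AU t)).
  by rewrite E1 E2.
- move=> m n k e a b c w IH e0 e1 w'.
  have W0 : wfb f a b by split.
  have W0' : wfb g (hcomp v a) (fun p z => emapT u v (b p z)) := wf_fill_inv (wf_emap h w').
  have -> : clsE w' = clsE (wf_fillP c W0) by apply: clsE_eq; apply: eqv_refl.
  rewrite alg_fill EmapQ_cls'.
  have -> : clsE (wf_emap h (wf_fillP c W0)) = clsE (wf_fillP c W0').
    by apply: clsE_eq; apply: eqv_refl; exact: wf_fillP.
  rewrite alg_fill.
  have h' : hcomp g (hcomp u (hcomp (alg s) (bcls W0)))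
            = hcomp (hcomp v a) (prod_map (idh _) (box_incl n.+1 e)).
    apply: hom_ext => p z.
    change (g p (u p (alg s p (bcls W0 p z))) = v p (a p (incl k n e p z))).
    transitivity (v p (f p (alg s p (bcls W0 p z)))).
      symmetry; exact: (f_equal (fun F : hom X Y' => F p (alg s p (bcls W0 p z))) h).
    congr (v p _); exact: (f_equal (fun F : hom (PB k n e) Y => F p z) (hB W0 s)).
  have := f_equal (fun F : hom _ _ => F m c) (Hm n k e a (hcomp (alg s) (bcls W0)) (hB W0 s) h').
  change (u m (phifill s (hB W0 s) m c) = fill (Phi t) h' m c ->
          u m (phifill s (hB W0 s) m c) = phifill t (hB W0' t) m c).
  move=> ->.
  change (fill (Phi t) h' m c = fill (Phi t) (hB W0' t) m c).
  congr (cmp _ m c); apply: fill_congr => //.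
  apply: hom_ext => p z.
  change (u p (alg s p (clsE (W01 W0 z))) = alg t p (clsE (W01 W0' z))).
  rewrite (IH p z (W01 W0 z)) EmapQ_cls'.
  congr (alg t p _); apply: clsE_eq; apply: eqv_refl; exact: (W01 W0' z).
Qed.

End Mor.

Theorem theorem2p15 :
  exists (W : AWFS)
    (Phi : forall (Y X : cSet) (f : hom Y X), RAlg W f -> UKF f),
    (forall (Y X : cSet) (f : hom Y X), bijective (@Phi Y X f)) /\
    (forall (Y X Y' X' : cSet) (f : hom Y X) (g : hom Y' X')
            (u : hom Y Y') (v : hom X X') (h : hcomp v f = hcomp g u)
            (s : RAlg W f) (t : RAlg W g),
       RAlg_mor h s t <-> UKF_mor u v (Phi _ _ f s) (Phi _ _ g t)).
Proof.
exists WW, (fun Y X f s => @Phi Y X f s); split.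
- move=> Y X f; exists (@Psi Y X f).
  + move=> s; exact: PsiPhi.
  + move=> U; exact: PhiPsi.
- move=> Y X Y' X' f g u v h s t; split.
  + exact: mor_fwd.
  + exact: mor_bwd.
Qed.
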